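(* Every $3\times3\times3$ quaternion tensor $T$ satisfies $\mathrm{rank}(T)\le6$.
   Context: $\mathbb{H}$ denotes the real quaternions. An $n_1\times n_2\times n_3$ quaternion tensor is an array $T=(T_{ijk})$ with entries in $\mathbb{H}$, $1\le i\le n_1$, $1\le j\le n_2$, $1\le k\le n_3$; it is written $T=(A_1;\dots;A_{n_2})$ where the frontal slice $A_j$ is the $n_1\times n_3$ matrix $(T_{ijk})_{i,k}$. A nonzero tensor is simple if $T_{ijk}=a_ib_jc_k$ (quaternion product in this order) for some $\vec a\in\mathbb{H}^{n_1},\vec b\in\mathbb{H}^{n_2},\vec c\in\mathbb{H}^{n_3}$. The rank of $T$ is the least number of simple tensors summing to $T$ (the zero tensor has rank $0$). *)

(* Defs.v *)
From mathcomp Require Import all_boot all_order all_algebra.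
From mathcomp Require Import reals.
Set Implicit Arguments. Unset Strict Implicit. Unset Printing Implicit Defensive.
Import Order.TTheory GRing.Theory Num.Theory.
Local Open Scope ring_scope.

(* a quaternion q0 + q1 i + q2 j + q3 k *)
Record quat (R : realType) := Quat { q0 : R; q1 : R; q2 : R; q3 : R }.

Definition qzero (R : realType) : quat R := Quat 0 0 0 0.

Definition qadd (R : realType) (x y : quat R) : quat R :=
  Quat (q0 x + q0 y) (q1 x + q1 y) (q2 x + q2 y) (q3 x + q3 y).

(* Hamilton product: i^2 = j^2 = k^2 = ijk = -1 *)
Definition qmul (R : realType) (x y : quat R) : quat R :=
  Quat (q0 x * q0 y - q1 x * q1 y - q2 x * q2 y - q3 x * q3 y)
       (q0 x * q1 y + q1 x * q0 y + q2 x * q3 y - q3 x * q2 y)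
       (q0 x * q2 y - q1 x * q3 y + q2 x * q0 y + q3 x * q1 y)
       (q0 x * q3 y + q1 x * q2 y - q2 x * q1 y + q3 x * q0 y).

Definition qtensor (R : realType) (n1 n2 n3 : nat) :=
  'I_n1 -> 'I_n2 -> 'I_n3 -> quat R.

Definition tzero (R : realType) n1 n2 n3 : qtensor R n1 n2 n3 :=
  fun _ _ _ => qzero R.

Definition tadd (R : realType) n1 n2 n3 (S T : qtensor R n1 n2 n3)
  : qtensor R n1 n2 n3 := fun i j k => qadd (S i j k) (T i j k).

Definition simple_tensor (R : realType) n1 n2 n3 (T : qtensor R n1 n2 n3) : Prop :=
  (exists i j k, T i j k <> qzero R) /\
  exists (a : 'I_n1 -> quat R) (b : 'I_n2 -> quat R) (c : 'I_n3 -> quat R),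
    forall i j k, T i j k = qmul (qmul (a i) (b j)) (c k).

Definition tsum (R : realType) n1 n2 n3 (s : seq (qtensor R n1 n2 n3)) :=
  foldr (@tadd R n1 n2 n3) (@tzero R n1 n2 n3) s.

Definition qrank_le (R : realType) n1 n2 n3 (T : qtensor R n1 n2 n3) (r : nat) : Prop :=
  exists s : seq (qtensor R n1 n2 n3),
    (size s <= r)%N /\ (forall l, (l < size s)%N -> simple_tensor (nth (@tzero R n1 n2 n3) s l)) /\
    forall i j k, T i j k = tsum s i j k.

(* Main.v *)
From HB Require Import structures.
Require Import Defs.
From mathcomp Require Import all_boot all_order all_algebra.
From mathcomp Require Import reals.
From mathcomp Require Import ring lra perm fingroup.
Set Implicit Arguments. Unset Strict Implicit. Unset Printing Implicit Defensive.
Import Order.TTheory GRing.Theory Num.Theory.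
Local Open Scope ring_scope.

Definition q2t (R : realType) (q : quat R) := (q0 q, q1 q, q2 q, q3 q).
Definition t2q (R : realType) (t : R * R * R * R) := Quat t.1.1.1 t.1.1.2 t.1.2 t.2.
Lemma q2tK (R : realType) : cancel (@q2t R) (@t2q R). Proof. by case. Qed.
HB.instance Definition _ (R : realType) := Choice.copy (quat R) (can_type (@q2tK R)).

Lemma quat_eq (R : realType) (x y : quat R) : q0 x = q0 y -> q1 x = q1 y -> q2 x = q2 y -> q3 x = q3 y -> x = y.
Proof. by case: x => ????; case: y => ???? /= -> -> -> ->. Qed.

Section QR.
Variable R : realType.
Definition qopp (x : quat R) := Quat (- q0 x) (- q1 x) (- q2 x) (- q3 x).
Lemma qaddA : associative (@qadd R). Proof. by move=> x y z; apply: quat_eq => /=; ring. Qed.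
Lemma qaddC : commutative (@qadd R). Proof. by move=> x y; apply: quat_eq => /=; ring. Qed.
Lemma qadd0 : left_id (qzero R) (@qadd R). Proof. by move=> x; apply: quat_eq => /=; ring. Qed.
Lemma qaddN : left_inverse (qzero R) qopp (@qadd R). Proof. by move=> x; apply: quat_eq => /=; ring. Qed.
End QR.
HB.instance Definition _ (R : realType) := GRing.isZmodule.Build (quat R) (@qaddA R) (@qaddC R) (@qadd0 R) (@qaddN R).
Section QR2.
Variable R : realType.
Definition qone : quat R := Quat 1 0 0 0.
Lemma qmulA : associative (@qmul R). Proof. by move=> x y z; apply: quat_eq => /=; ring. Qed.
Lemma qmul1 : left_id qone (@qmul R). Proof. by move=> x; apply: quat_eq => /=; ring. Qed.
Lemma qmulr1 : right_id qone (@qmul R). Proof. by move=> x; apply: quat_eq => /=; ring. Qed.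
Lemma qmulDl : left_distributive (@qmul R) (@qadd R). Proof. by move=> x y z; apply: quat_eq => /=; ring. Qed.
Lemma qmulDr : right_distributive (@qmul R) (@qadd R). Proof. by move=> x y z; apply: quat_eq => /=; ring. Qed.
Lemma qone_neq0 : qone != qzero R :> quat R.
Proof. apply/eqP => /(congr1 (@q0 R)) /= /eqP; by rewrite oner_eq0. Qed.
End QR2.
HB.instance Definition _ (R : realType) := GRing.Zmodule_isNzRing.Build (quat R) (@qmulA R) (@qmul1 R) (@qmulr1 R) (@qmulDl R) (@qmulDr R) (@qone_neq0 R).


Section Basic.
Variable R : realType.
Local Notation H := (quat R).

Lemma addE (x y : H) : x + y = qadd x y. Proof. by []. Qed.
Lemma mulE (x y : H) : x * y = qmul x y. Proof. by []. Qed.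
Lemma zeroE : 0 = qzero R. Proof. by []. Qed.
Lemma oneE : 1 = qone R. Proof. by []. Qed.
Lemma oppE (x : H) : - x = qopp x. Proof. by []. Qed.

Definition qr (x : R) : H := Quat x 0 0 0.
Definition qconj (q : H) : H := Quat (q0 q) (- q1 q) (- q2 q) (- q3 q).
Definition qn (q : H) : R := q0 q ^+ 2 + q1 q ^+ 2 + q2 q ^+ 2 + q3 q ^+ 2.
Fact qinv_key : unit. Proof. by []. Qed.
Definition qinv (q : H) : H := locked_with qinv_key (qr (qn q)^-1 * qconj q).
Lemma qinvE q : qinv q = qr (qn q)^-1 * qconj q. Proof. by rewrite /qinv unlock. Qed.

Ltac qsimpl := rewrite ?addE ?mulE ?zeroE ?oneE ?oppE; apply: quat_eq => /=.

Lemma qn_ge0 q : 0 <= qn q.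
Proof. rewrite /qn; by rewrite !addr_ge0 ?sqr_ge0. Qed.

Lemma qn_eq0 q : (qn q == 0) = (q == 0).
Proof.
apply/idP/idP; last by move/eqP->; rewrite /qn /= expr0n /= !addr0.
move=> /eqP h; apply/eqP; move: h; rewrite /qn => h.
have a : q0 q = 0 by nra.
have b : q1 q = 0 by nra.
have c : q2 q = 0 by nra.
have d : q3 q = 0 by nra.
by qsimpl.
Qed.

Lemma qr_comm x (y : H) : qr x * y = y * qr x.
Proof. by qsimpl; ring. Qed.

Lemma qrM x y : qr (x * y) = qr x * qr y. Proof. by qsimpl; ring. Qed.
Lemma qrD x y : qr (x + y) = qr x + qr y. Proof. by qsimpl; ring. Qed.
Lemma qrN x : qr (- x) = - qr x. Proof. by qsimpl; ring. Qed.
Lemma qr1 : qr 1 = 1. Proof. by []. Qed.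
Lemma qr0 : qr 0 = 0. Proof. by []. Qed.

Lemma qmulV q : q != 0 -> q * qinv q = 1.
Proof.
rewrite -qn_eq0 => hq; rewrite qinvE qr_comm mulrA.
have -> : q * qconj q = qr (qn q) by qsimpl; rewrite /qn; ring.
by rewrite -qrM mulfV.
Qed.

Lemma qmulVl q : q != 0 -> qinv q * q = 1.
Proof.
rewrite -qn_eq0 => hq; rewrite qinvE -mulrA.
have -> : qconj q * q = qr (qn q) by qsimpl; rewrite /qn; ring.
by rewrite -qrM mulVf.
Qed.

Lemma qinv_comm a q : a * q = q * a -> a * qinv q = qinv q * a.
Proof.
move=> h; rewrite qinvE mulrA -qr_comm -!mulrA; congr (_ * _).
move: h; rewrite !mulE /qconj /= => /(f_equal (fun z => (q0 z, q1 z, q2 z, q3 z))) [h0 h1 h2 h3].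
qsimpl; lra.
Qed.

Definition fsyl (a b : H) : H := a * a - qr (2 * q0 b) * a + qr (qn b).

Lemma sylvester a b c : fsyl a b != 0 -> exists q, a * q - q * b = c.
Proof.
move=> hF; set F := fsyl a b.
exists (qinv F * (a * c - c * qconj b)).
have hc : a * qinv F = qinv F * a.
  apply: qinv_comm; rewrite /F /fsyl; qsimpl; ring.
have hz : forall z, a * (qinv F * z) - qinv F * z * b = qinv F * (a * z - z * b).
  by move=> z; rewrite mulrBr (mulrA a) hc (mulrA (qinv F)) (mulrA (qinv F) z).
rewrite hz.
have -> : a * (a * c - c * qconj b) - (a * c - c * qconj b) * b = F * c.
  rewrite /F /fsyl /qn; qsimpl; ring.
by rewrite mulrA qmulVl // mul1r.
Qed.

Lemma fsyl_neq0 a b : qn a != qn b -> fsyl a b != 0.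
Proof.
move=> hn; apply/eqP => h; move/eqP: hn; apply.
move: h; rewrite /fsyl /qn; rewrite !addE !mulE !oppE /= => /(f_equal (fun z => (q0 z, q1 z, q2 z, q3 z))) [h0 h1 h2 h3].
(* imaginary parts: 2 (a0 - b0) a_i = 0 *)
case: (eqVneq (q0 a) (q0 b)) => e.
  rewrite e in h0 *; nra.
have : q1 a = 0 /\ q2 a = 0 /\ q3 a = 0.
  have ne : q0 a - q0 b != 0 by rewrite subr_eq0.
  have k : forall x, (q0 a - q0 b) * x = 0 -> x = 0.
    by move=> x /eqP; rewrite mulf_eq0 (negbTE ne) /= => /eqP.
  by split; [|split]; apply: k; nra.
move=> [e1 [e2 e3]]; rewrite e1 e2 e3 in h0 *; nra.
Qed.

Lemma qnqinv q : q != 0 -> qr (qn q) * qinv q = qconj q.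
Proof. by rewrite -qn_eq0 => h; rewrite qinvE mulrA -qrM mulfV // mul1r. Qed.

Lemma q0B (x y : H) : q0 (x - y) = q0 x - q0 y. Proof. by []. Qed.
Lemma q0D (x y : H) : q0 (x + y) = q0 x + q0 y. Proof. by []. Qed.

End Basic.


Section LInv.
Variable R : realType.
Local Notation H := (quat R).

Lemma tperm_mx_invol n (i j : 'I_n) : tperm_mx i j *m tperm_mx i j = 1%:M :> 'M[H]_n.
Proof. by rewrite /tperm_mx -perm_mxM tperm2 perm_mx1. Qed.

Lemma linv_or_low n (A : 'M[H]_n.+1) :
  (exists B : 'M[H]_n.+1, B *m A = 1%:M) \/
  (exists (U : 'M[H]_(n.+1, n)) (V : 'M[H]_(n, n.+1)), A = U *m V).
Proof.
elim: n A => [|n IH] A.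
  case: (eqVneq (A 0 0) 0) => h.
    right; exists 0, 0; apply/matrixP => i j.
    by rewrite !ord1 h mulmx0 mxE.
  left; exists (qinv (A 0 0))%:M; apply/matrixP => i j.
  rewrite !ord1 mul_scalar_mx !mxE /= mulr1n qmulVl //.
case: (boolP [forall i, A i 0 == 0]) => hc.
  right; exists (rsubmx (A : 'M_(n.+2, 1 + n.+1))).
  exists (row_mx 0 1%:M : 'M_(n.+1, 1 + n.+1)).
  suff e : (A : 'M_(n.+2, 1 + n.+1)) = rsubmx (A : 'M_(n.+2, 1 + n.+1)) *m (row_mx 0 1%:M : 'M_(n.+1, 1 + n.+1)) by exact: e.
  rewrite mul_mx_row mulmx0 mulmx1.
  have -> : (0 : 'M_(n.+2, 1)) = lsubmx (A : 'M_(n.+2, 1 + n.+1)).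
    apply/matrixP => i j; rewrite !mxE ord1.
    move/forallP: hc => /(_ i) /eqP e; rewrite -e; congr (A i _); exact: val_inj.
  by symmetry; exact: hsubmxK.
have [p hp] : exists p, A p 0 != 0.
  by move: hc; rewrite negb_forall => /existsP.
have [A' eA'] : exists A' : 'M[H]_(1 + n.+1), A' = tperm_mx 0 p *m A by eexists.
have hA : A = tperm_mx 0 p *m A' by rewrite eA' mulmxA tperm_mx_invol mul1mx.
set a := A' 0 0.
have ha : a != 0.
  by rewrite /a eA' -xrowE /xrow /row_perm mxE tpermL.
set ai := qinv a.
set r := ursubmx A'; set c := dlsubmx A'; set D := drsubmx A'.
have hA' : A' = block_mx a%:M r c D.
  rewrite -{1}[A']submxK [ulsubmx A']mx11_scalar; congr (block_mx _%:M _ _ _).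
  by rewrite !mxE /a; congr (A' _ _); apply: val_inj.
have hai : ai%:M *m a%:M = 1%:M :> 'M_1 by rewrite -scalar_mxM qmulVl.
have hai' : a%:M *m ai%:M = 1%:M :> 'M_1 by rewrite -scalar_mxM qmulV.
set S := D - c *m (ai%:M *m r).
case: (IH S) => [[Si hSi]|[U' [V' hS]]].
  left.
  set B' := block_mx (ai%:M + ai%:M *m r *m Si *m c *m ai%:M) (- (ai%:M *m r *m Si))
               (- (Si *m c *m ai%:M)) Si.
  have hB : B' *m A' = 1%:M :> 'M_(1 + n.+1).
    have hSiD : Si *m D = 1%:M + Si *m (c *m (ai%:M *m r)).
      by apply/eqP; rewrite -subr_eq -mulmxBr -hSi.
    rewrite hA' /B' mulmx_block [1%:M]scalar_mx_block; congr block_mx.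
    - rewrite mulmxDl !mulNmx -!mulmxA hai mulmx1.
      by rewrite addrK.
    - rewrite mulmxDl !mulNmx -!mulmxA hSiD !mulmxDr mulmx1.
      by rewrite subrr.
    - by rewrite !mulNmx -!mulmxA hai mulmx1 addNr.
    - by rewrite !mulNmx -!mulmxA hSiD addrC addrK.
  exists (B' *m tperm_mx 0 p).
  by rewrite hA mulmxA -(mulmxA B') tperm_mx_invol mulmx1.
right.
pose U0 : 'M[H]_(1 + n.+1, 1 + n) := block_mx 1%:M 0 (c *m ai%:M) U'.
pose V0 : 'M[H]_(1 + n, 1 + n.+1) := block_mx a%:M r 0 V'.
have hUV : U0 *m V0 = A'.
  rewrite /U0 /V0 mulmx_block hA' !mul1mx !mul0mx !mulmx0 !addr0; congr block_mx.
  - by rewrite -mulmxA hai mulmx1.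
  - by rewrite -hS /S -mulmxA addrC subrK.
exists (tperm_mx 0 p *m U0), V0.
by rewrite -mulmxA hUV.
Qed.
End LInv.


Definition o0 : 'I_3 := @Ordinal 3 0 isT.
Definition o1 : 'I_3 := @Ordinal 3 1 isT.
Definition o2 : 'I_3 := @Ordinal 3 2 isT.

Lemma ord3_cases (i : 'I_3) : i = o0 \/ i = o1 \/ i = o2.
Proof.
case: i => [[|[|[|//]]] hi]; [left|right;left|right;right]; exact: val_inj.
Qed.

Section M3.
Variable R : realType.
Local Notation H := (quat R).

Lemma mul3 (A B : 'M[H]_3) i k :
  (A *m B) i k = A i o0 * B o0 k + A i o1 * B o1 k + A i o2 * B o2 k.
Proof.
rewrite mxE !big_ord_recl big_ord0 addr0 addrA.
by congr (_ * _ + _ * _ + _ * _); congr (_ _ _); apply: val_inj.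
Qed.

Definition mkM (f : nat -> nat -> H) : 'M[H]_3 := \matrix_(i, k) f i k.

Lemma mkME f i k : mkM f i k = f i k. Proof. by rewrite mxE. Qed.

Definition diagq (g : 'I_3 -> H) : 'M[H]_3 := \matrix_(i, k) (if i == k then g i else 0).

End M3.


Section Diag.
Variable R : realType.
Local Notation H := (quat R).

Ltac c3 i := case: (ord3_cases i) => [->|[->|->]].
Ltac qring := rewrite ?addE ?mulE ?zeroE ?oneE ?oppE; apply: quat_eq => /=; ring.
Ltac simp3 := rewrite ?mul3 ?mkME ?mxE /= ?mulr0 ?mul0r ?mulr1 ?mul1r ?addr0 ?add0r.

Lemma diag_upper (X : 'M[H]_3) :
  X o1 o0 = 0 -> X o2 o0 = 0 -> X o2 o1 = 0 ->
  qn (X o0 o0) != qn (X o1 o1) -> qn (X o0 o0) != qn (X o2 o2) -> qn (X o1 o1) != qn (X o2 o2) ->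
  exists (U Ui : 'M[H]_3) g, U *m Ui = 1%:M /\ X = U *m diagq g *m Ui.
Proof.
move=> h10 h20 h21 n01 n02 n12.
have [p hp] := sylvester (- X o0 o1) (fsyl_neq0 n01).
have [r hr] := sylvester (- X o1 o2) (fsyl_neq0 n12).
have [q hq] := sylvester (- (X o0 o1 * r + X o0 o2)) (fsyl_neq0 n02).
pose U := mkM (fun i k => match i, k with 0,0 => 1 | 0,1 => p | 0,2 => q | 1,1 => 1 | 1,2 => r | 2,2 => 1 | _,_ => 0 end).
pose Ui := mkM (fun i k => match i, k with 0,0 => 1 | 0,1 => - p | 0,2 => p * r - q | 1,1 => 1 | 1,2 => - r | 2,2 => 1 | _,_ => 0 end).
exists U, Ui, (fun i => X i i).
have hU : U *m Ui = 1%:M.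
  by apply/matrixP => i k; c3 i; c3 k; simp3; qring.
split => //.
have hXU : X *m U = U *m diagq (fun i => X i i).
  apply/matrixP => i k; c3 i; c3 k; simp3; rewrite ?h10 ?h20 ?h21 ?mul0r ?addr0 ?add0r //.
  - by rewrite -[X o0 o1]opprK -hp opprB addrC subrK.
  - by rewrite -addrA -[X o0 o1 * r + _]opprK -hq opprB addrC subrK.
  - by rewrite -[X o1 o2]opprK -hr opprB addrC subrK.
by rewrite -{1}(mulmx1 X) -hU mulmxA hXU.
Qed.

Definition Jm : 'M[H]_3 := mkM (fun i k => if (i + k == 2)%N then 1 else 0).

Lemma JJ : Jm *m Jm = 1%:M.
Proof. by apply/matrixP => i k; c3 i; c3 k; rewrite /Jm; simp3. Qed.

Lemma JYJ (Y : 'M[H]_3) i k : (Jm *m Y *m Jm) i k = Y (rev_ord i) (rev_ord k).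
Proof.
have r0 : rev_ord o0 = o2 by apply: val_inj.
have r1 : rev_ord o1 = o1 by apply: val_inj.
have r2 : rev_ord o2 = o0 by apply: val_inj.
by c3 i; c3 k; rewrite ?r0 ?r1 ?r2 /Jm; simp3.
Qed.

Lemma diag_lower (Y : 'M[H]_3) :
  Y o0 o1 = 0 -> Y o0 o2 = 0 -> Y o1 o2 = 0 ->
  qn (Y o0 o0) != qn (Y o1 o1) -> qn (Y o0 o0) != qn (Y o2 o2) -> qn (Y o1 o1) != qn (Y o2 o2) ->
  exists (U Ui : 'M[H]_3) g, U *m Ui = 1%:M /\ Y = U *m diagq g *m Ui.
Proof.
move=> h01 h02 h12 n01 n02 n12.
have r0 : rev_ord o0 = o2 by apply: val_inj.
have r1 : rev_ord o1 = o1 by apply: val_inj.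
have r2 : rev_ord o2 = o0 by apply: val_inj.
have [U [Ui [g [hU hZ]]]] : exists (U Ui : 'M[H]_3) g, U *m Ui = 1%:M /\ Jm *m Y *m Jm = U *m diagq g *m Ui.
  apply: diag_upper; rewrite ?JYJ ?r0 ?r1 ?r2 //.
  - by rewrite eq_sym.
  - by rewrite eq_sym.
  - by rewrite eq_sym.
exists (Jm *m U), (Ui *m Jm), g; split.
  by rewrite mulmxA -(mulmxA Jm) hU mulmx1 JJ.
have -> : Y = Jm *m (Jm *m Y *m Jm) *m Jm by rewrite !mulmxA JJ mul1mx -mulmxA JJ mulmx1.
by rewrite hZ !mulmxA.
Qed.

End Diag.


Section Choose.
Variable R : realType.
Local Notation H := (quat R).

Lemma grow (z q : H) (v x0 : R) : q != 0 -> exists x, x0 <= x /\ v < qn (z - qr x * q).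
Proof.
rewrite -qn_eq0 => hq.
have Qp : 0 < qn q by rewrite lt_def hq qn_ge0.
set Q := qn q.
set P := q0 z * q0 q + q1 z * q1 q + q2 z * q2 q + q3 z * q3 q.
have hqn : forall x, qn (z - qr x * q) = x ^+ 2 * Q - 2 * x * P + qn z.
  by move=> x; rewrite /Q /P /qn /= ; ring.
set x := 1 + `|x0| + (2 * `|P| + `|v|) / Q.
have hd : 0 <= (2 * `|P| + `|v|) / Q.
  by apply: divr_ge0; [apply: addr_ge0; [apply: mulr_ge0 => //|] | exact: ltW].
exists x; split.
  by rewrite /x; have := ler_norm x0; lra.
rewrite hqn.
have x1 : 1 <= x by rewrite /x; have := normr_ge0 x0; lra.
have xQ : Q + 2 * `|P| + `|v| <= x * Q.
  have e : (2 * `|P| + `|v|) / Q * Q = 2 * `|P| + `|v| by rewrite mulfVK ?gt_eqF.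
  rewrite /x (mulrDl (1 + `|x0|)) e (mulrDl 1) mul1r; have : 0 <= `|x0| * Q by rewrite mulr_ge0 // ltW.
  lra.
have hz := qn_ge0 z.
have hP := ler_norm P; have hP' : - P <= `|P| by rewrite -normrN ler_norm.
have hv := ler_norm v; have hv' : - v <= `|v| by rewrite -normrN ler_norm.
have hn := normr_ge0 P; have hnv := normr_ge0 v.
have x0' : 0 <= x by lra.
have h1 : x * (Q + 2 * `|P| + `|v|) <= x * (x * Q) by rewrite ler_wpM2l.
have hA : 0 <= x * (`|P| - P) by rewrite mulr_ge0 //; lra.
have hB : 0 <= (x - 1) * `|v| by rewrite mulr_ge0 //; lra.
have hC : 0 < x * Q by rewrite mulr_gt0 //; lra.
lra.
Qed.


Lemma choose_t (N : 'M[H]_3) : exists t : R,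
  N o2 o2 + qr t != 0 /\
  (N o1 o1 + qr t) - N o1 o2 * qinv (N o2 o2 + qr t) * N o2 o1 != 0.
Proof.
set n22 := N o2 o2; set n11 := N o1 o1; set b := N o1 o2; set c := N o2 o1.
set K0 := q0 (b * qconj n22 * c); set K1 := q0 (b * c).
set m := 3 + `|q0 n22| + `|q0 n11| + `|K0| + `|K1|.
set t := 2 * m.
exists t.
set a := n22 + qr t.
have hm3 : 3 <= m.
  by rewrite /m; have := normr_ge0 (q0 n22); have := normr_ge0 (q0 n11); have := normr_ge0 K0; have := normr_ge0 K1; lra.
have ha0 : q0 a = q0 n22 + t by rewrite /a addE.
have hn22 : - q0 n22 <= `|q0 n22| by rewrite -normrN ler_norm.
have hu : m <= q0 a.
  rewrite ha0 /t /m; have := normr_ge0 (q0 n11); have := normr_ge0 K0; have := normr_ge0 K1; lra.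
have ha : a != 0 by apply/eqP => e; move: hu; rewrite e zeroE /=; lra.
split => //.
apply/eqP => hs.
have hqa : qn a != 0 by rewrite qn_eq0.
have key : qr (qn a) * (n11 + qr t - b * qinv a * c) = qr (qn a) * (n11 + qr t) - b * qconj a * c.
  rewrite mulrBr; congr (_ - _).
  by rewrite mulrA mulrA (qr_comm _ b) -(mulrA b (qr (qn a))) qnqinv // mulrA.
move: key; rewrite hs mulr0 => /(f_equal (@q0 R)).
have e1 : q0 (qr (qn a) * (n11 + qr t)) = qn a * (q0 n11 + t) by rewrite !mulE addE /=; ring.
have e2 : q0 (b * qconj a * c) = K0 + t * K1.
  by rewrite /K0 /K1 /a /qconj !mulE !addE /=; ring.
rewrite q0B e1 e2 /= => e0.
have hK0 : K0 <= m by rewrite /m; have := ler_norm K0; have := normr_ge0 (q0 n11); have := normr_ge0 (q0 n22); have := normr_ge0 K1; lra.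
have hK1 : K1 <= m by rewrite /m; have := ler_norm K1; have := normr_ge0 (q0 n11); have := normr_ge0 (q0 n22); have := normr_ge0 K0; lra.
have hn11 : - q0 n11 <= `|q0 n11| by rewrite -normrN ler_norm.
have hv : m <= q0 n11 + t by rewrite /t /m; have := normr_ge0 (q0 n22); have := normr_ge0 K0; have := normr_ge0 K1; lra.
have hqa2 : q0 a ^+ 2 <= qn a by rewrite /qn -!addrA lerDl !addr_ge0 ?sqr_ge0.
have h1 : m * m <= qn a.
  apply: le_trans hqa2; rewrite expr2; apply: ler_pM => //; lra.
have h2 : m * m * m <= qn a * (q0 n11 + t) by apply: ler_pM => //; [nra|lra].
have h3 : t * K1 <= t * m by rewrite ler_wpM2l // /t; lra.
have h4 : 0 < m * (m * m - 2 * m - 1) by apply: mulr_gt0; nra.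
have ht2 : t * m = 2 * (m * m) by rewrite /t; ring.
move: e0 h2 h3 h4 ht2; clearbody t; move=> e0 h2 h3 h4 ht2; nra.
Qed.

End Choose.


Section Key.
Variable R : realType.
Local Notation H := (quat R).

Ltac c3 i := case: (ord3_cases i) => [->|[->|->]].
Ltac qring := rewrite ?addE ?mulE ?zeroE ?oneE ?oppE; apply: quat_eq => /=; ring.
Ltac simp3 := rewrite ?mul3 ?mkME ?mxE /= ?mulr0 ?mul0r ?mulr1 ?mul1r ?addr0 ?add0r.

Lemma mulK (x y : H) : y != 0 -> x * qinv y * y = x.
Proof. by move=> h; rewrite -mulrA qmulVl // mulr1. Qed.

Lemma rearr1 (c A Z : H) : c - ((c - A) + Z + (A - Z)) = 0. Proof. qring. Qed.
Lemma rearr2 (c Z : H) : c - (Z + (c - Z)) = 0. Proof. qring. Qed.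
Lemma rearr3 (c A xs xB : H) : c - (xs + xB + (A - xB)) = c - A - xs. Proof. qring. Qed.
Lemma msubE (A B : 'M[H]_3) i k : (A - B) i k = A i k - B i k. Proof. by rewrite !mxE. Qed.
Lemma qn_qr (x : R) : qn (qr x) = x ^+ 2. Proof. rewrite /qn /=; ring. Qed.

Lemma key2 (N C : 'M[H]_3) : exists (t : R) (U Ui U' Ui' : 'M[H]_3) (g d : 'I_3 -> H),
  U *m Ui = 1%:M /\ U' *m Ui' = 1%:M /\
  U *m diagq g *m Ui *m (N + (qr t)%:M) + U' *m diagq d *m Ui' = C.
Proof.
have [t [ha hs]] := choose_t N.
exists t.
have [N' eN'] : exists N', N' = N + (qr t)%:M by eexists.
rewrite -eN'.
have e22 : N' o2 o2 = N o2 o2 + qr t by rewrite eN' !mxE eqxx mulr1n.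
have e11 : N' o1 o1 = N o1 o1 + qr t by rewrite eN' !mxE eqxx mulr1n.
have e12 : N' o1 o2 = N o1 o2 by rewrite eN' !mxE /= mulr0n addr0.
have e21 : N' o2 o1 = N o2 o1 by rewrite eN' !mxE /= mulr0n addr0.
rewrite -e22 -e11 -e12 -e21 in ha hs.
set a := N' o2 o2 in ha *.
set s2 := N' o1 o1 - N' o1 o2 * qinv a * N' o2 o1 in hs *.
set X01 := (C o0 o1 - C o0 o2 * qinv a * N' o2 o1) * qinv s2.
set X02 := (C o0 o2 - X01 * N' o1 o2) * qinv a.
set Y00 := C o0 o0 - (X01 * N' o1 o0 + X02 * N' o2 o0).
have [x2 [hx2 hy2]] := grow (C o2 o2) (qn Y00) 1 ha.
set K2 := C o1 o1 - C o1 o2 * qinv a * N' o2 o1.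
have [x1 [hx1 hy1]] := grow K2 (qn (C o2 o2 - qr x2 * a)) (x2 + 1) hs.
set X12 := (C o1 o2 - qr x1 * N' o1 o2) * qinv a.
pose X := mkM (fun i k => match i, k with 0,1 => X01 | 0,2 => X02 | 1,1 => qr x1 | 1,2 => X12 | 2,2 => qr x2 | _,_ => 0 end).
pose Y := C - X *m N'.
have hY01 : Y o0 o1 = 0.
  rewrite /Y msubE mul3 /X !mkME /= mul0r add0r.
  have E1 : X01 * s2 = C o0 o1 - C o0 o2 * qinv a * N' o2 o1 by rewrite /X01 mulK.
  have E2 : X02 * N' o2 o1 = C o0 o2 * qinv a * N' o2 o1 - X01 * (N' o1 o2 * qinv a * N' o2 o1).
    by rewrite /X02 !mulrBl !mulrA.
  have E3 : X01 * N' o1 o1 = X01 * s2 + X01 * (N' o1 o2 * qinv a * N' o2 o1).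
    by rewrite /s2 mulrBr subrK.
  by rewrite E2 E3 E1 rearr1.
have hY02 : Y o0 o2 = 0.
  rewrite /Y msubE mul3 /X !mkME /= mul0r add0r.
  have E4 : X02 * a = C o0 o2 - X01 * N' o1 o2 by rewrite /X02 mulK.
  by rewrite E4 rearr2.
have hY12 : Y o1 o2 = 0.
  rewrite /Y msubE mul3 /X !mkME /= mul0r add0r.
  have E4 : X12 * a = C o1 o2 - qr x1 * N' o1 o2 by rewrite /X12 mulK.
  by rewrite E4 rearr2.
have hY00 : Y o0 o0 = Y00 by rewrite /Y msubE mul3 /X !mkME /= mul0r add0r.
have hY22 : Y o2 o2 = C o2 o2 - qr x2 * a by rewrite /Y msubE mul3 /X !mkME /= !mul0r !add0r.
have hY11 : Y o1 o1 = K2 - qr x1 * s2.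
  rewrite /Y msubE mul3 /X !mkME /= mul0r add0r.
  have E5 : X12 * N' o2 o1 = C o1 o2 * qinv a * N' o2 o1 - qr x1 * (N' o1 o2 * qinv a * N' o2 o1).
    by rewrite /X12 !mulrBl !mulrA.
  have E6 : qr x1 * N' o1 o1 = qr x1 * s2 + qr x1 * (N' o1 o2 * qinv a * N' o2 o1).
    by rewrite /s2 mulrBr subrK.
  by rewrite E5 E6 rearr3.
have [U [Ui [g [hU hX]]]] : exists (U Ui : 'M[H]_3) g, U *m Ui = 1%:M /\ X = U *m diagq g *m Ui.
  have q0n : qn (0 : H) = 0 by rewrite /qn /=; ring.
  apply: diag_upper; rewrite /X ?mkME /= ?qn_qr ?q0n //; apply/eqP; nra.
have [U' [Ui' [d [hU' hY]]]] : exists (U Ui : 'M[H]_3) g, U *m Ui = 1%:M /\ Y = U *m diagq g *m Ui.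
  apply: diag_lower; rewrite ?hY00 ?hY11 ?hY22 //.
  - by rewrite lt_eqF // (lt_trans hy2 hy1).
  - by rewrite lt_eqF.
  - by rewrite gt_eqF.
exists U, Ui, U', Ui', g, d; split => //; split => //.
by rewrite -hX -hY /Y addrC subrK.
Qed.
End Key.


Section Tens.
Variable R : realType.
Local Notation H := (quat R).
Local Notation tens := (qtensor R 3 3 3).

Definition triple := (('I_3 -> H) * ('I_3 -> H) * ('I_3 -> H))%type.
Definition tterm (x : triple) : tens := fun i j k => x.1.1 i * x.1.2 j * x.2 k.

Lemma tsumE (s : seq tens) i j k : tsum s i j k = \sum_(t <- s) t i j k.
Proof. by elim: s => [|t s IH] /=; [rewrite big_nil | rewrite big_cons -IH]. Qed.

Definition nzt (t : tens) : bool := [exists i, exists j, exists k, t i j k != 0].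

Lemma rank_terms (T : tens) (s : seq triple) :
  (forall i j k, T i j k = \sum_(x <- s) tterm x i j k) -> qrank_le T (size s).
Proof.
move=> hT.
exists [seq tterm x | x <- s & nzt (tterm x)]; split; [|split].
- by rewrite size_map size_filter count_size.
- move=> l; rewrite size_map => hl.
  set x0 : triple := (fun _ => 0, fun _ => 0, fun _ => 0).
  rewrite (nth_map x0) //.
  have hnz := all_nthP x0 (filter_all (fun x => nzt (tterm x)) s) l hl.
  split.
    move: hnz => /existsP [i /existsP [j /existsP [k /eqP h]]].
    by exists i, j, k.
  set y := nth _ _ _.
  by exists y.1.1, y.1.2, y.2.
- move=> i j k; rewrite tsumE hT big_map big_filter [RHS]big_mkcond /=.
  apply: eq_bigr => x _; case: ifP => // /negbT.
  rewrite /nzt negb_exists => /forallP /(_ i); rewrite negb_exists => /forallP /(_ j).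
  by rewrite negb_exists => /forallP /(_ k); rewrite negbK => /eqP.
Qed.

End Tens.


Section Main.
Variable R : realType.
Local Notation H := (quat R).
Local Notation tens := (qtensor R 3 3 3).

Definition slice (T : tens) (j : 'I_3) : 'M[H]_3 := \matrix_(i, k) T i j k.

Lemma sum_diag (U W : 'M[H]_3) (c : 'I_3 -> H) i k :
  \sum_l U i l * c l * W l k = (U *m diagq c *m W) i k.
Proof.
rewrite [RHS]mxE; apply: eq_bigr => l _; congr (_ * _).
rewrite mxE (bigD1 l) //= big1 ?addr0; first by rewrite mxE eqxx.
by move=> m hm; rewrite mxE (negbTE hm) mulr0.
Qed.

Lemma sum_diag3 (U W : 'M[H]_3) (c : 'I_3 -> H) i k :
  \sum_(l <- [:: o0; o1; o2]) U i l * c l * W l k = (U *m diagq c *m W) i k.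
Proof. by rewrite !big_cons big_nil addr0 !mul3 !mxE /= !mulr0 !addr0 !add0r addrA. Qed.

Lemma diagq_const (x : H) : diagq (fun _ => x) = x%:M.
Proof. by apply/matrixP => i k; rewrite !mxE; case: eqP. Qed.

Lemma scal_comm (x : H) (M : 'M[H]_3) : (forall y, x * y = y * x) -> M *m x%:M = x%:M *m M.
Proof.
move=> hx; apply/matrixP => i k; rewrite mul_scalar_mx !mxE (bigD1 k) //= big1 ?addr0.
  by rewrite mxE eqxx mulr1n hx.
by move=> m hm; rewrite mxE (negbTE hm) mulr0n mulr0.
Qed.

Lemma maddE (A B : 'M[H]_3) i k : (A + B) i k = A i k + B i k. Proof. by rewrite mxE. Qed.

Lemma constr (T : tens) (ja jb jc : 'I_3) :
  (forall j, j = ja \/ j = jb \/ j = jc) -> ja != jb -> ja != jc -> jb != jc ->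
  forall Bi : 'M[H]_3, Bi *m slice T jb = 1%:M -> qrank_le T 6.
Proof.
move=> hcov nab nac nbc Bi hB.
have [t [U [Ui [U' [Ui' [g [d [hU [hU' hkey]]]]]]]]] := key2 (slice T ja *m Bi) (slice T jc *m Bi).
set K := (slice T ja *m Bi + (qr t)%:M) *m slice T jb.
have hK : K = slice T ja + qr t *: slice T jb by rewrite /K mulmxDl -mulmxA hB mulmx1 mul_scalar_mx.
set W := Ui *m K; set W' := Ui' *m slice T jb.
pose b1 (l : 'I_3) (j : 'I_3) : H := if j == ja then 1 else if j == jb then 0 else g l.
pose b2 (l : 'I_3) (j : 'I_3) : H := if j == ja then - qr t else if j == jb then 1 else d l.
pose s := [seq ((fun i => U i l), b1 l, (fun k => W l k)) | l <- [:: o0; o1; o2]] ++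
          [seq ((fun i => U' i l), b2 l, (fun k => W' l k)) | l <- [:: o0; o1; o2]].
have -> : 6%N = size s by [].
apply: rank_terms => i j k.
rewrite big_cat !big_map /= !sum_diag3 /=.
rewrite -maddE.
have -> : T i j k = slice T j i k by rewrite mxE.
congr (_ i k).
have hcb : jc == jb = false by rewrite eq_sym (negbTE nbc).
have hca : jc == ja = false by rewrite eq_sym (negbTE nac).
have hba : jb == ja = false by rewrite eq_sym (negbTE nab).
case: (hcov j) => [->|[->|->]]; rewrite /b1 /b2 ?eqxx ?hcb ?hca ?hba ?diagq_const.
- rewrite mulmx1 /W mulmxA hU mul1mx hK scal_comm; last by move=> y; rewrite -qrN qr_comm.
  by rewrite -mulmxA /W' (mulmxA U') hU' mul1mx mul_scalar_mx scaleNr addrK.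
- have z : (0 : H)%:M = 0 :> 'M[H]_3 by apply/matrixP => a b; rewrite !mxE mul0rn.
  by rewrite z mulmx0 mul0mx add0r mulmx1 /W' mulmxA hU' mul1mx.
  by rewrite /W /K /W' !mulmxA -mulmxDl hkey -mulmxA hB mulmx1.
Qed.


Definition m0 : 'I_2 := @Ordinal 2 0 isT.
Definition m1 : 'I_2 := @Ordinal 2 1 isT.

Lemma mul2 (U : 'M[H]_(3,2)) (V : 'M[H]_(2,3)) i k : (U *m V) i k = U i m0 * V m0 k + U i m1 * V m1 k.
Proof.
rewrite mxE !big_ord_recl big_ord0 addr0.
by congr (_ * _ + _ * _); congr (_ _ _); apply: val_inj.
Qed.

Lemma easy (T : tens) (U0 U1 U2 : 'M[H]_(3,2)) (V0 V1 V2 : 'M[H]_(2,3)) :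
  slice T o0 = U0 *m V0 -> slice T o1 = U1 *m V1 -> slice T o2 = U2 *m V2 -> qrank_le T 6.
Proof.
move=> h0 h1 h2.
pose e (j : 'I_3) : 'I_3 -> H := fun j' => if j' == j then 1 else 0.
pose tr (U : 'M[H]_(3,2)) (V : 'M[H]_(2,3)) j m : triple R := ((fun i => U i m), e j, (fun k => V m k)).
pose s := [:: tr U0 V0 o0 m0; tr U0 V0 o0 m1; tr U1 V1 o1 m0; tr U1 V1 o1 m1; tr U2 V2 o2 m0; tr U2 V2 o2 m1].
have -> : 6%N = size s by [].
apply: rank_terms => i j k.
rewrite !big_cons big_nil /tterm /= /e.
have -> : T i j k = slice T j i k by rewrite mxE.
case: (ord3_cases j) => [->|[->|->]]; rewrite ?h0 ?h1 ?h2 mul2 /=; rewrite !mulr1 !mulr0 !mul0r ?addr0 ?add0r //.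
Qed.

End Main.


Local Close Scope ring_scope.

Theorem mainTheorem16 (R : realType) (T : qtensor R 3 3 3) : qrank_le T 6.
Proof.
have c := ord3_cases.
case: (linv_or_low (slice T o1)) => [[B hB]|[U1 [V1 h1]]].
  apply: (@constr R T o0 o1 o2 _ _ _ _ B hB) => //.
case: (linv_or_low (slice T o0)) => [[B hB]|[U0 [V0 h0]]].
  apply: (@constr R T o1 o0 o2 _ _ _ _ B hB) => // j; case: (c j); tauto.
case: (linv_or_low (slice T o2)) => [[B hB]|[U2 [V2 h2]]].
  apply: (@constr R T o0 o2 o1 _ _ _ _ B hB) => // j; case: (c j); tauto.
exact: easy h0 h1 h2.
Qed.
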